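(* Let $X$ be a finite connected poset and $\theta\in\mathcal{M}(X)$. Then $\theta\in\mathcal{AM}(X)$ if and only if $s^+_{\theta,\Gamma}(z)-s^-_{\theta,\Gamma}(z)=t^+_{\theta,\Gamma}(z)-t^-_{\theta,\Gamma}(z)$ holds for every $z\in X$ and every weak crown $\Gamma$ in $X$, i.e. every closed semiwalk $\Gamma: x_1<y_1>x_2<y_2>\dots>x_n<y_n>x_1$ with $n\ge2$ and $x_1,\dots,x_n,y_1,\dots,y_n$ pairwise distinct.
   Context: For $x<y$, $e_{xy}$ denotes the incidence-algebra basis element and $B=\{e_{xy}:x<y\}$. For a bijection $\theta:B\to B$ and a maximal chain $C:u_1<\dots<u_k$, $\theta$ is increasing on $C$ if there is a maximal chain $D:v_1<\dots<v_k$ with $\theta(e_{u_iu_j})=e_{v_iv_j}$ for all $i<j$, decreasing if $\theta(e_{u_iu_j})=e_{v_{k-j+1}v_{k-i+1}}$ for all $i<j$. $\mathcal{M}(X)$ is the set of bijections $B\to B$ increasing or decreasing on every maximal chain. A semiwalk is a sequence $u_0,\dots,u_m$ with $u_i<u_{i+1}$ or $u_i>u_{i+1}$ for each $i$; a walk is a semiwalk in which one of $u_i,u_{i+1}$ covers the other for each $i$; closed if $u_0=u_m$. For a closed semiwalk $\Gamma:u_0,\dots,u_m=u_0$ and $z\in X$: $s^+_{\theta,\Gamma}(z)=|\{i: u_i<u_{i+1},\ \exists w>z,\ \theta(e_{zw})=e_{u_iu_{i+1}}\}|$, $s^-_{\theta,\Gamma}(z)=|\{i: u_i>u_{i+1},\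 \exists w>z,\ \theta(e_{zw})=e_{u_{i+1}u_i}\}|$, $t^+_{\theta,\Gamma}(z)=|\{i: u_i<u_{i+1},\ \exists w<z,\ \theta(e_{wz})=e_{u_iu_{i+1}}\}|$, $t^-_{\theta,\Gamma}(z)=|\{i: u_i>u_{i+1},\ \exists w<z,\ \theta(e_{wz})=e_{u_{i+1}u_i}\}|$, $0\le i\le m-1$. $\theta$ is admissible if $s^+-s^-=t^+-t^-$ at every $z$ for every closed walk; $\mathcal{AM}(X)$ is the set of admissible elements of $\mathcal{M}(X)$. A weak $n$-crown is a poset on distinct $x_1,\dots,x_n,y_1,\dots,y_n$ with $x_i<y_i$, $x_{i+1}<y_i$ ($i<n$) and $x_1<y_n$ (further comparabilities allowed). *)

(* Defs.v *)
From mathcomp Require Import all_boot all_order all_algebra.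
Set Implicit Arguments. Unset Strict Implicit. Unset Printing Implicit Defensive.
Import Order.Theory.

Local Open Scope order_scope.

Section PosetDefs.
Context {d : Order.disp_t} {X : finPOrderType d}.

(* The basis B = { e_xy : x < y } *)
Definition B := {p : X * X | p.1 < p.2}.

Definition thmap (th : B -> B) (p : X * X) : option (X * X) :=
  omap (fun b : B => val (th b)) (insub p).

Definition scomp (x y : X) : bool := (x < y) || (y < x).

Definition covers (x y : X) : bool := (x < y) && [forall z : X, ~~ ((x < z) && (z < y))].
Definition covcomp (x y : X) : bool := covers x y || covers y x.

Definition connected_poset : Prop := forall x y : X, connect scomp x y.

Definition chain (c : seq X) : bool := sorted <%O c.
Definition maximal_chain (c : seq X) : Prop :=
  chain c /\ forall c' : seq X, chain c' -> {subset c <= c'} -> {subset c' <= c}.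

Definition increasing_on (th : B -> B) (C : seq X) : Prop :=
  exists D : seq X, maximal_chain D /\ size D = size C /\
    forall (i j : nat) (x0 : X), (i < j < size C)%N ->
      thmap th (nth x0 C i, nth x0 C j) = Some (nth x0 D i, nth x0 D j).

Definition decreasing_on (th : B -> B) (C : seq X) : Prop :=
  exists D : seq X, maximal_chain D /\ size D = size C /\
    forall (i j : nat) (x0 : X), (i < j < size C)%N ->
      thmap th (nth x0 C i, nth x0 C j) = Some (nth x0 (rev D) j, nth x0 (rev D) i).

Definition inM (th : B -> B) : Prop :=
  bijective th /\
  forall C : seq X, maximal_chain C -> increasing_on th C \/ decreasing_on th C.

(* A (closed) semiwalk / walk u0, u1, ..., um is represented as u0 :: us. *)
Definition closed_semiwalk (u0 : X) (us : seq X) : bool :=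
  path scomp u0 us && (last u0 us == u0).
Definition closed_walk (u0 : X) (us : seq X) : bool :=
  path covcomp u0 us && (last u0 us == u0).

Definition steps (u0 : X) (us : seq X) : seq (X * X) := zip (u0 :: us) us.

Definition s_plus (th : B -> B) (u0 : X) (us : seq X) (z : X) : nat :=
  count (fun p : X * X => (p.1 < p.2) &&
           [exists w : X, (z < w) && (thmap th (z, w) == Some p)]) (steps u0 us).
Definition s_minus (th : B -> B) (u0 : X) (us : seq X) (z : X) : nat :=
  count (fun p : X * X => (p.2 < p.1) &&
           [exists w : X, (z < w) && (thmap th (z, w) == Some (p.2, p.1))]) (steps u0 us).
Definition t_plus (th : B -> B) (u0 : X) (us : seq X) (z : X) : nat :=
  count (fun p : X * X => (p.1 < p.2) &&
           [exists w : X, (w < z) && (thmap th (w, z) == Some p)]) (steps u0 us).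
Definition t_minus (th : B -> B) (u0 : X) (us : seq X) (z : X) : nat :=
  count (fun p : X * X => (p.2 < p.1) &&
           [exists w : X, (w < z) && (thmap th (w, z) == Some (p.2, p.1))]) (steps u0 us).

Definition balanced (th : B -> B) (u0 : X) (us : seq X) (z : X) : Prop :=
  ((s_plus th u0 us z)%:Z - (s_minus th u0 us z)%:Z =
   (t_plus th u0 us z)%:Z - (t_minus th u0 us z)%:Z)%R.

Definition admissible (th : B -> B) : Prop :=
  forall (u0 : X) (us : seq X), closed_walk u0 us -> forall z : X, balanced th u0 us z.

Definition inAM (th : B -> B) : Prop := inM th /\ admissible th.

(* Weak crown x1 < y1 > x2 < y2 > ... > xn < yn > x1, with xs = x1 :: xr,
   as the closed semiwalk u0 = x1, us = y1, x2, y2, x3, ..., yn, x1. *)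
Definition crown_walk (x1 : X) (xr ys : seq X) : seq X :=
  flatten [seq [:: p.1; p.2] | p <- zip ys (rcons xr x1)].

Definition weak_crown (x1 : X) (xr ys : seq X) : bool :=
  [&& (2 <= size ys)%N, size ys == (size xr).+1,
      uniq (x1 :: xr ++ ys),
      all (fun p : X * X => p.1 < p.2) (zip (x1 :: xr) ys) &
      all (fun p : X * X => p.2 < p.1) (zip ys (rcons xr x1))].

End PosetDefs.

(* Main.v *)
From Stdlib Require Import Classical.
Require Import Defs.
From mathcomp Require Import all_boot all_order all_algebra.
From mathcomp Require Import zify.
Set Implicit Arguments. Unset Strict Implicit. Unset Printing Implicit Defensive.
Import Order.Theory GRing.Theory.
Local Open Scope order_scope.

Section Cocycle.
Context {d : Order.disp_t} {X : finPOrderType d} (G : X -> X -> int).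

Definition PS (L : seq X) : int := (\sum_(p <- zip L (behead L)) G p.1 p.2)%R.

Lemma PS_nil : PS [::] = 0%R. Proof. by rewrite /PS big_nil. Qed.
Lemma PS_one a : PS [:: a] = 0%R. Proof. by rewrite /PS big_nil. Qed.
Lemma PS_cons2 a b s : PS [:: a, b & s] = (G a b + PS (b :: s))%R.
Proof. by rewrite /PS /= big_cons. Qed.

Lemma PS_cat s1 a s2 : PS (s1 ++ a :: s2) = (PS (rcons s1 a) + PS (a :: s2))%R.
Proof.
elim: s1 => [|h s1 IH]; first by rewrite /= PS_one add0r.
case: s1 IH => [|h' s1] IH /=; first by rewrite !PS_cons2 PS_one addr0.
by rewrite !PS_cons2 IH addrA.
Qed.

Lemma PS_rcons a s b : PS (rcons (a :: s) b) = (PS (a :: s) + G (last a s) b)%R.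
Proof.
elim: s a => [|h s IH] a /=; first by rewrite PS_cons2 !PS_one addr0 add0r.
by rewrite PS_cons2 IH PS_cons2 addrA.
Qed.

Definition CS (c : seq X) : int := if c is h :: _ then PS (rcons c h) else 0%R.

Hypothesis Ganti : forall u v, G u v = (- G v u)%R.

Lemma Gxx u : G u u = 0%R.
Proof. have h := Ganti u u; lia. Qed.

Lemma CS_rot1 a s : CS (a :: s) = CS (rcons s a).
Proof.
case: s => [|b r] //=.
rewrite PS_cons2 -[in RHS]rcons_cons PS_rcons -rcons_cons PS_rcons last_rcons; lia.
Qed.

Lemma CS_rot p1 m p2 : CS (p1 ++ m :: p2) = CS (m :: p2 ++ p1).
Proof.
elim: p1 p2 => [|a p1 IH] p2; first by rewrite cats0.
by rewrite cat_cons CS_rot1 rcons_cat rcons_cons IH cat_rcons.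
Qed.


Hypothesis Gadd : forall a b c, a < b -> b < c -> G a c = (G a b + G b c)%R.

Definition mono3 (a b c : X) := ((a < b) && (b < c)) || ((c < b) && (b < a)).

Lemma Gmono a b c : mono3 a b c -> G a c = (G a b + G b c)%R.
Proof.
case/orP => /andP[h1 h2]; first exact: Gadd.
by rewrite Ganti (Gadd h1 h2) [G a b]Ganti [G b c]Ganti; lia.
Qed.

Lemma mono3_scomp a b c : mono3 a b c -> scomp a c.
Proof.
rewrite /scomp; case/orP => /andP[h1 h2].
  by rewrite (lt_trans h1 h2).
by rewrite (lt_trans h1 h2) orbT.
Qed.

Lemma sorted_cat_mid (e : rel X) s1 a s2 :
  sorted e (s1 ++ a :: s2) = sorted e (rcons s1 a) && sorted e (a :: s2).
Proof.
case: s1 => [|h s1] /=; first by [].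
by rewrite cat_path rcons_path /= andbA.
Qed.

Lemma not_uniq_split (c : seq X) : ~~ uniq c ->
  exists c1 a c2 c3, c = c1 ++ a :: c2 ++ a :: c3.
Proof.
elim: c => [|h c IH] //=; rewrite negb_and negbK; case/orP.
  by case/splitPr => p1 p2; exists [::], h, p1, p2.
by case/IH => [c1 [a [c2 [c3 ->]]]]; exists (h :: c1), a, c2, c3.
Qed.

Lemma min_exists (s : seq X) : s != [::] ->
  exists2 m, m \in s & forall y, y \in s -> ~~ (y < m).
Proof.
elim: s => [|h s IH] _ //.
case: s IH => [|h' s] IH.
  by exists h => [|y]; rewrite ?mem_seq1 ?inE // => /eqP ->; rewrite ltxx.
have [m' m'in m'min] := IH isT.
case: (boolP (h < m')) => hm.
  exists h; first by rewrite inE eqxx.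
  move=> y; rewrite inE; case/orP => [/eqP ->|yin]; first by rewrite ltxx.
  by apply/negP => yh; have := m'min y yin; rewrite (lt_trans yh hm).
exists m'; first by rewrite inE m'in orbT.
by move=> y; rewrite inE; case/orP => [/eqP ->|/m'min].
Qed.

Definition ilv (ys xs : seq X) := flatten [seq [:: p.1; p.2] | p <- zip ys xs].

Lemma ilv_cons y ys x xs : ilv (y :: ys) (x :: xs) = y :: x :: ilv ys xs.
Proof. by []. Qed.

Lemma ilv_size ys xs : size ys = size xs -> size (ilv ys xs) = (size ys).*2.
Proof.
elim: ys xs => [|y ys IH] [|x xs] //= [h].
by rewrite IH // doubleS.
Qed.

Lemma ilv_perm ys xs : size ys = size xs -> perm_eq (ilv ys xs) (ys ++ xs).
Proof.
elim: ys xs => [|y ys IH] [|x xs] //= [h].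
rewrite perm_cons; apply: (@perm_trans _ (x :: ys ++ xs)); first by rewrite perm_cons IH.
by rewrite perm_sym -cat1s perm_catCA.
Qed.

Definition alt (L : seq X) := forall s1 a b c s3,
  L = s1 ++ [:: a, b, c & s3] -> ~~ mono3 a b c.

Lemma scomp_lt (a b : X) : scomp a b -> ~~ (b < a) -> a < b.
Proof. by rewrite /scomp => /orP[] // ->. Qed.

Lemma scompC (a b : X) : scomp a b = scomp b a.
Proof. by rewrite /scomp orbC. Qed.

Lemma extract n (a e : X) t0 : size t0 <= n ->
  path scomp a (rcons t0 e) -> alt (a :: rcons t0 e) ->
  a < head e t0 -> e < last a t0 ->
  exists xr ys, [/\ rcons t0 e = ilv ys (rcons xr e), size ys = (size xr).+1,
     all (fun p : X * X => p.1 < p.2) (zip (a :: xr) ys) &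
     all (fun p : X * X => p.2 < p.1) (zip ys (rcons xr e))].
Proof.
elim: n a t0 => [|n IH] a [|y t1] //=.
- by move=> _ _ _ h1 h2; have := lt_trans h1 h2; rewrite ltxx.
- by move=> _ _ _ h1 h2; have := lt_trans h1 h2; rewrite ltxx.
move=> sz /andP[ay p] Halt h1 h2.
case: t1 sz p Halt h2 => [|x t2] sz p Halt h2.
  by exists [::], [:: y]; rewrite /= h1 h2.
move: p => /= /andP[syx p].
have xy : x < y.
  apply: scomp_lt; first by rewrite /scomp orbC.
  apply/negP => yx; move/negP: (Halt [::] a y x (rcons t2 e) erefl); apply.
  by rewrite /mono3 h1 yx.
have [xr [ys [E1 E2 E3 E4]]] : exists xr ys,
  [/\ rcons t2 e = ilv ys (rcons xr e), size ys = (size xr).+1,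
     all (fun p : X * X => p.1 < p.2) (zip (x :: xr) ys) &
     all (fun p : X * X => p.2 < p.1) (zip ys (rcons xr e))].
  apply: IH => //.
  - by move: sz => /= /ltnW.
  - by move=> s1 a' b' c' s3 E; apply: (Halt [:: a, y & s1]); rewrite /= E.
  - apply: scomp_lt; first by case: t2 p {sz Halt h2} => [|w t2] /= /andP[].
    apply/negP => hx.
    case: t2 p Halt {sz h2} hx => [|w t2] p Halt hx.
      by move/negP: (Halt [:: a] y x e [::] erefl); apply; rewrite /mono3 hx xy orbT.
    by move/negP: (Halt [:: a] y x w (rcons t2 e) erefl); apply; rewrite /mono3 hx xy orbT.
exists (x :: xr), (y :: ys); split => //=.
- by rewrite E1.
- by rewrite E2.
- by rewrite h1.
- by rewrite xy.
Qed.

Hypothesis Hcrown : forall (x1 : X) xr ys, weak_crown x1 xr ys ->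
  PS (x1 :: crown_walk x1 xr ys) = 0%R.

Lemma head_last_short (s1 : seq X) a b c s3 x0 :
  head x0 (s1 ++ [:: a, c & s3]) = head x0 (s1 ++ [:: a, b, c & s3]) /\
  last x0 (s1 ++ [:: a, c & s3]) = last x0 (s1 ++ [:: a, b, c & s3]).
Proof. by split; [case: s1 | rewrite !last_cat]. Qed.

Lemma cyc_zero n (c : seq X) : size c <= n -> cycle scomp c -> CS c = 0%R.
Proof.
elim: n c => [|n IH] c; first by case: c.
move=> szc cyc.
case: (boolP (uniq c)) => [uc|nu]; last first.
  have [c1 [a [c2 [c3 E]]]] := not_uniq_split nu.
  have E' : rot (size c1) c = a :: c2 ++ a :: (c3 ++ c1).
    by rewrite E rot_size_cat /= -catA.
  have cyc' : cycle scomp (a :: c2 ++ a :: (c3 ++ c1)) by rewrite -E' rot_cycle.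
  have -> : CS c = CS (a :: c2 ++ a :: (c3 ++ c1)) by rewrite E CS_rot -catA.
  have -> : CS (a :: c2 ++ a :: (c3 ++ c1)) = (CS (a :: c2) + CS (a :: (c3 ++ c1)))%R.
    by rewrite /CS -cat_cons rcons_cat PS_cat /=.
  move: cyc'; rewrite /= rcons_cat /=.
  have := sorted_cat_mid scomp (a :: c2) a (rcons (c3 ++ c1) a) => /= ->.
  case/andP => cy1 cy2.
  have sz : size c = (size c1 + size c2 + size c3).+2.
    by rewrite E size_cat /= size_cat /=; lia.
  rewrite -[PS (a :: rcons c2 a)]/(CS (a :: c2)) -[PS (a :: rcons (c3 ++ c1) a)]/(CS (a :: (c3 ++ c1))).
  rewrite (IH (a :: c2)) ?(IH (a :: (c3 ++ c1))) //= ?size_cat; lia.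
case: c szc cyc uc => [|h [|k [|l r]]] szc cyc uc.
- by [].
- by rewrite /= PS_cons2 PS_one addr0 Gxx.
- by rewrite /= !PS_cons2 PS_one addr0 [G k h]Ganti subrr.
set c := [:: h, k, l & r] in szc cyc uc *.
have sz3 : (3 <= size c)%N by [].
clearbody c.
have [m min_c m_min] : exists2 m, m \in c & forall y, y \in c -> ~~ (y < m).
  by apply: min_exists; case: c sz3 {szc cyc uc}.
case/splitPr: min_c m_min szc cyc uc sz3 => p1 p2 m_min szc cyc uc sz3.
set s := p2 ++ p1.
have Erot : rot (size p1) (p1 ++ m :: p2) = m :: s by rewrite rot_size_cat.
have -> : CS (p1 ++ m :: p2) = CS (m :: s) by rewrite CS_rot.
have cyc' : cycle scomp (m :: s) by rewrite -Erot rot_cycle.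
have us : uniq (m :: s) by rewrite -Erot rot_uniq.
have mem' : forall y, (y \in m :: s) = (y \in p1 ++ m :: p2).
  by move=> y; rewrite -Erot mem_rot.
have szs : (2 <= size s)%N /\ (size s <= n)%N.
  by move: szc sz3; rewrite -(size_rot (size p1) (p1 ++ m :: p2)) Erot /=; lia.
have mmin : forall y, y \in m :: s -> ~~ (y < m) by move=> y; rewrite mem' => /m_min.
clearbody s; clear Erot mem' m_min.
move: cyc' => /= cyc'.
case: (classic (exists s1 a b c0 s3, m :: rcons s m = s1 ++ [:: a, b, c0 & s3] /\ mono3 a b c0)).
  case=> [s1 [a [b [c0 [s3 [EL Hm]]]]]].
  have [Hh Hl] := head_last_short s1 a b c0 s3 m.
  have srt : sorted scomp (s1 ++ [:: a, c0 & s3]).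
    move: (cyc'); rewrite -[path _ _ _]/(sorted scomp (m :: rcons s m)) EL.
    rewrite !sorted_cat_mid => /andP[-> /=] /andP[_ /andP[_ ->]].
    by rewrite (mono3_scomp Hm).
  have PSeq : PS (s1 ++ [:: a, c0 & s3]) = PS (m :: rcons s m).
    by rewrite EL !PS_cat !PS_cons2 (Gmono Hm); lia.
  have szL : size (s1 ++ [:: a, c0 & s3]) = (size s).+1.
    have := congr1 size EL; rewrite /= size_rcons !size_cat /=; lia.
  move: Hh Hl srt PSeq szL; rewrite -EL.
  case: (s1 ++ [:: a, c0 & s3]) => [|h' w] //= -> Hl srt PSeq szL.
  move: Hl srt PSeq szL; rewrite last_rcons.
  case/lastP: w => [|u l'] /=.
  - by move=> _ _ _; case: szs => h1 _ [] E0; rewrite -E0 in h1.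
  rewrite last_rcons => -> srt PSeq; rewrite size_rcons => -[szu].
  by rewrite -PSeq; apply: (IH (m :: u)) => //=; rewrite szu; case: szs.
move=> Hno.
have Halt : alt (m :: rcons s m).
  move=> s1 a b c0 s3 EL; apply/negP => Hm; apply: Hno.
  by exists s1, a, b, c0, s3.
have hd : m < head m s.
  case: s cyc' us mmin szs {Halt Hno} => [|y s] /=; first by move=> _ _ _ [].
  move=> /andP[my _] _ mmin _.
  by apply: scomp_lt => //; apply: mmin; rewrite !inE eqxx ?orbT.
have lt : m < last m s.
  apply: scomp_lt; last by apply: mmin; exact: mem_last.
  by move: cyc'; rewrite rcons_path scompC => /andP[].
have [xr [ys [E1 E2 E3 E4]]] := extract (leqnn (size s)) cyc' Halt hd lt.
have <- : PS (m :: crown_walk m xr ys) = PS (m :: rcons s m) by rewrite E1.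
apply: Hcrown.
have szys : size ys = size (rcons xr m) by rewrite size_rcons.
apply/and5P; split; [ | by rewrite E2 | | exact: E3 | exact: E4].
- have := congr1 size E1; rewrite size_rcons ilv_size //.
  case: szs => h2 _; have h3 : (2 <= size (s : seq X))%N by [].
  rewrite -muln2 => E5; lia.
- have : uniq (rcons s m) by rewrite rcons_uniq -(cons_uniq m s).
  rewrite E1 (perm_uniq (ilv_perm szys)).
  by rewrite uniq_catC -cats1 -catA uniq_catCA.
Qed.


Lemma PS_cat2 a s1 s2 : PS (a :: s1 ++ s2) = (PS (a :: s1) + PS (last a s1 :: s2))%R.
Proof.
elim: s1 a => [|h s1 IH] a /=; first by rewrite PS_one add0r.
by rewrite !PS_cons2 IH addrA.
Qed.

Definition Iv (a b : X) := [set y | mono3 a y b].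

Lemma ltF (x y : X) : x < y -> y < x -> False.
Proof. by move=> h1 h2; have := lt_asym x y; rewrite h1 h2. Qed.

Lemma mono3_subl a w b y : mono3 a w b -> mono3 a y w -> mono3 a y b.
Proof.
rewrite /mono3 => /orP[]/andP[h1 h2] /orP[]/andP[h3 h4].
- by rewrite h3 (lt_trans h4 h2).
- by case: (ltF h1 (lt_trans h3 h4)).
- by case: (ltF h2 (lt_trans h3 h4)).
- by rewrite h4 (lt_trans h1 h3) orbT.
Qed.

Lemma mono3_subr a w b y : mono3 a w b -> mono3 w y b -> mono3 a y b.
Proof.
rewrite /mono3 => /orP[]/andP[h1 h2] /orP[]/andP[h3 h4].
- by rewrite (lt_trans h1 h3) h4.
- by case: (ltF h2 (lt_trans h3 h4)).
- by case: (ltF h1 (lt_trans h3 h4)).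
- by rewrite h3 (lt_trans h4 h2) orbT.
Qed.

Lemma mono3_xx a w : mono3 a w w = false.
Proof. by rewrite /mono3 !ltxx !andbF. Qed.

Lemma mono3_l a w b : mono3 a w b -> mono3 w a b = false.
Proof.
rewrite /mono3 => /orP[]/andP[h1 h2]; apply/negP => /orP[]/andP[h3 h4].
- exact: ltF h1 h3.
- exact: ltF h3 (lt_trans h1 h2).
- exact: ltF h4 (lt_trans h1 h2).
- exact: ltF h4 h2.
Qed.

Lemma mono3_scl a w b : mono3 a w b -> scomp a w.
Proof. by rewrite /mono3 /scomp => /orP[]/andP[h1 h2]; rewrite ?h1 ?h2 ?orbT. Qed.

Lemma mono3_scr a w b : mono3 a w b -> scomp w b.
Proof. by rewrite /mono3 /scomp => /orP[]/andP[h1 h2]; rewrite ?h1 ?h2 ?orbT. Qed.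

Lemma sat_chain n (a b : X) : (#|Iv a b| < n)%N -> scomp a b ->
  exists s, [/\ path covcomp a s, last a s = b & PS (a :: s) = G a b].
Proof.
elim: n a b => [|n IH] a b //= szI sab.
case: (set_0Vmem (Iv a b)) => [I0|[w]].
  exists [:: b]; split => //; last by rewrite PS_cons2 PS_one addr0.
  have nb : forall z, ~~ mono3 a z b.
    move=> z; apply/negP => hz; have : z \in Iv a b by rewrite inE.
    by rewrite I0 inE.
  rewrite /= andbT /covcomp /covers.
  case/orP: sab => [ab|ba].
  - apply/orP; left; rewrite ab /=; apply/forallP => z; apply/negP => hz.
    by move: (nb z); rewrite /mono3 hz.
  - apply/orP; right; rewrite ba /=; apply/forallP => z; apply/negP => hz.
    by move: (nb z); rewrite /mono3 hz orbT.
rewrite inE => Hw.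
have sub1 : Iv a w \proper Iv a b.
  apply/properP; split; last by exists w; rewrite !inE ?mono3_xx.
  by apply/subsetP => y; rewrite !inE; apply: mono3_subl.
have sub2 : Iv w b \proper Iv a b.
  apply/properP; split; last by exists w; rewrite !inE ?Hw // /mono3 !ltxx ?andbF.
  by apply/subsetP => y; rewrite !inE; apply: mono3_subr.
have [s1 [p1 l1 e1]] := IH a w (leq_trans (proper_card sub1) (ltnSE szI)) (mono3_scl Hw).
have [s2 [p2 l2 e2]] := IH w b (leq_trans (proper_card sub2) (ltnSE szI)) (mono3_scr Hw).
exists (s1 ++ s2); split.
- by rewrite cat_path p1 l1 p2.
- by rewrite last_cat l1.
- by rewrite PS_cat2 e1 l1 e2 (Gmono Hw).
Qed.

Lemma refine x t : path scomp x t ->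
  exists t', [/\ path covcomp x t', last x t' = last x t & PS (x :: t') = PS (x :: t)].
Proof.
elim: t x => [|y t IH] x /=; first by exists [::].
case/andP => sxy pt.
have [s [p1 l1 e1]] := sat_chain (ltnSn #|Iv x y|) sxy.
have [t' [p2 l2 e2]] := IH y pt.
exists (s ++ t'); split.
- by rewrite cat_path p1 l1 p2.
- by rewrite last_cat l1.
- by rewrite PS_cat2 e1 l1 e2 PS_cons2.
Qed.

Lemma zip_trunc (s ys : seq X) x : (size ys <= size s)%N ->
  zip (rcons s x) ys = zip s ys.
Proof.
elim: s ys => [|h s IH] [|y ys] //= sz.
by rewrite IH.
Qed.

Lemma ilv_path a xs ys : size ys = size xs ->
  all (fun p : X * X => p.1 < p.2) (zip (a :: xs) ys) ->
  all (fun p : X * X => p.2 < p.1) (zip ys xs) ->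
  path scomp a (ilv ys xs) /\ last a (ilv ys xs) = last a xs.
Proof.
elim: ys xs a => [|y ys IH] [|x xs] a //= [sz] /andP[ay u] /andP[xy dn].
have [p l] := IH xs x sz u dn.
by rewrite /scomp ay xy orbT p l.
Qed.

Lemma crown_closed (x1 : X) xr ys : weak_crown x1 xr ys ->
  path scomp x1 (crown_walk x1 xr ys) /\ last x1 (crown_walk x1 xr ys) = x1.
Proof.
case/and5P => _ /eqP sz _ up dn.
have := @ilv_path x1 (rcons xr x1) ys.
rewrite size_rcons -rcons_cons zip_trunc ?sz //= => /(_ erefl up dn) [p l].
by split => //; rewrite /crown_walk -/(ilv ys (rcons xr x1)) l last_rcons.
Qed.


End Cocycle.

Section Chains.
Context {d : Order.disp_t} {X : finPOrderType d}.

Definition ischain (S : {set X}) :=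
  [forall x in S, forall y in S, (x <= y) || (y <= x)].
Definition maxch (S : {set X}) := ischain S &&
  [forall T : {set X}, (ischain T && (S \subset T)) ==> (T \subset S)].
Definition sortS (S : {set X}) := sort <=%O (enum S).

Lemma mem_sortS S x : (x \in sortS S) = (x \in S).
Proof. by rewrite mem_sort mem_enum. Qed.

Lemma size_sortS S : size (sortS S) = #|S|.
Proof. by rewrite size_sort cardE. Qed.

Lemma sortS_chain S : ischain S -> chain (sortS S).
Proof.
move=> HS; rewrite /chain lt_sorted_uniq_le sort_uniq enum_uniq /=.
apply: (@sort_sorted_in _ (mem S)).
  move=> x y xS yS; by move/forallP: HS => /(_ x) /implyP /(_ xS) /forallP /(_ y) /implyP /(_ yS).
by apply/allP => x; rewrite mem_enum.
Qed.

Lemma chain_nth (c : seq X) x0 i j : chain c -> (i < j)%N -> (j < size c)%N ->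
  nth x0 c i < nth x0 c j.
Proof.
move=> hc ij jn; apply: (sorted_ltn_nth lt_trans) => //; rewrite inE //.
exact: ltn_trans ij jn.
Qed.

Lemma index_lt (c : seq X) x y : chain c -> x \in c -> y \in c -> x < y ->
  (index x c < index y c)%N.
Proof.
move=> hc xc yc xy; case: (ltngtP (index x c) (index y c)) => // h.
  have := chain_nth x hc h; rewrite index_mem xc => /(_ isT).
  by rewrite !nth_index // => yx; have := lt_asym x y; rewrite xy yx.
by move: xy; have := congr1 (nth x c) h; rewrite !nth_index // => ->; rewrite ltxx.
Qed.

Lemma chain_set (c : seq X) : chain c -> ischain [set x in c].
Proof.
move=> hc; apply/forallP => x; apply/implyP; rewrite inE => xc.
apply/forallP => y; apply/implyP; rewrite inE => yc.
case: (ltngtP (index x c) (index y c)) => h.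
- have := chain_nth x hc h; rewrite index_mem yc !nth_index // => /(_ isT) /ltW ->.
  by [].
- have := chain_nth x hc h; rewrite index_mem xc !nth_index // => /(_ isT) /ltW ->.
  by rewrite orbT.
- by have := congr1 (nth x c) h; rewrite !nth_index // => ->; rewrite lexx.
Qed.

Lemma maxch_seq S : maxch S -> maximal_chain (sortS S).
Proof.
case/andP => HS /forallP Hmax; split; first exact: sortS_chain.
move=> c' hc' sub x xc'.
have /implyP := Hmax [set x in c'].
rewrite chain_set //= => /(_ _) /subsetP; rewrite mem_sortS.
apply; last by rewrite inE.
by apply/subsetP => y yS; rewrite inE; apply: sub; rewrite mem_sortS.
Qed.

Lemma seq_maxch (c : seq X) : maximal_chain c -> maxch [set x in c].
Proof.
case=> hc Hmax; rewrite /maxch chain_set //=.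
apply/forallP => T; apply/implyP => /andP[HT /subsetP sub].
apply/subsetP => x xT; rewrite inE.
apply: (Hmax (sortS T)); first exact: sortS_chain.
  by move=> y yc; rewrite mem_sortS; apply: sub; rewrite inE.
by rewrite mem_sortS.
Qed.

Lemma ext_max (T0 : {set X}) : ischain T0 -> exists2 T, maxch T & T0 \subset T.
Proof.
move=> H0.
case: (@arg_maxnP _ T0 (fun T => ischain T && (T0 \subset T)) (fun T => #|T|)).
  by rewrite H0 subxx.
move=> T /andP[HT sub] Tmax; exists T => //.
rewrite /maxch HT /=; apply/forallP => T'; apply/implyP => /andP[HT' sub'].
have : T == T' by rewrite eqEcard sub' /=; apply: Tmax; rewrite HT' (subset_trans sub sub').
by move/eqP ->.
Qed.


Section Theta.
Variable th : @B d X -> @B d X.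

Lemma thmap_some p v : thmap th p = Some v -> exists b : B, val b = p /\ val (th b) = v.
Proof. by rewrite /thmap; case: insubP => [b _ <-|] //= [<-]; exists b. Qed.

Lemma thmap_lt p v : thmap th p = Some v -> p.1 < p.2 /\ v.1 < v.2.
Proof. by case/thmap_some => b [<- <-]; split; [exact: (valP b) | exact: (valP (th b))]. Qed.

Lemma thmap_def (b : B) : thmap th (val b) = Some (val (th b)).
Proof. by rewrite /thmap valK. Qed.

Lemma thmap_ex p : p.1 < p.2 -> exists v, thmap th p = Some v.
Proof. by move=> h; exists (val (th (Sub p h : B))); rewrite -thmap_def SubK. Qed.

Hypothesis Hinj : injective th.

Lemma thmap_inj p p' v : thmap th p = Some v -> thmap th p' = Some v -> p = p'.
Proof.
case/thmap_some => b [<- <-]; case/thmap_some => b' [<- /val_inj E].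
by rewrite (Hinj E).
Qed.

Definition gset (S : {set X}) : {set X} :=
  [set x | [exists p, exists q, exists y, [&& p \in S, q \in S &
     (thmap th (p, q) == Some (x, y)) || (thmap th (p, q) == Some (y, x))]]].

Lemma pick_pair n k : (1 < n)%N -> (k < n)%N ->
  exists i j, [/\ (i < j)%N, (j < n)%N & (k = i) \/ (k = j)].
Proof.
move=> n1 kn; case: (ltnP k n.-1) => h.
  exists k, n.-1; split; [exact: h | lia | by left].
exists 0, k; split; [lia | exact: kn | by right].
Qed.

Lemma gset_eq (S : {set X}) (C E : seq X) x0 (b : bool) : chain C -> (forall x, (x \in C) = (x \in S)) ->
  size E = size C -> (1 < size C)%N ->
  (forall i j, (i < j)%N -> (j < size C)%N -> thmap th (nth x0 C i, nth x0 C j) =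
      Some (if b then (nth x0 E i, nth x0 E j) else (nth x0 E j, nth x0 E i))) ->
  gset S = [set x in E].
Proof.
move=> hC memC szE sz1 R; apply/setP => x; rewrite !inE; apply/idP/idP.
  case/existsP => p /existsP [q] /existsP [y] /and3P [pS qS /orP H].
  have [Hp Hq] : p \in C /\ q \in C by rewrite !memC.
  have pq : p < q by case: H => /eqP /thmap_lt [].
  have ij := index_lt hC Hp Hq pq.
  have jn : (index q C < size C)%N by rewrite index_mem.
  have := R _ _ ij jn; rewrite !nth_index // => HR.
  have mi : nth x0 E (index p C) \in E by rewrite mem_nth // szE (ltn_trans ij jn).
  have mj : nth x0 E (index q C) \in E by rewrite mem_nth // szE.
  by case: H => /eqP H; rewrite H in HR; move: HR; case: (b) => -[E1 E2]; rewrite ?E1 ?E2.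
move=> xE; have := index_mem x E; rewrite xE szE => kn.
have [i [j [ij jn Hk]]] := pick_pair sz1 kn.
have HR := R _ _ ij jn.
have mi : nth x0 C i \in S by rewrite -memC mem_nth // (ltn_trans ij jn).
have mj : nth x0 C j \in S by rewrite -memC mem_nth.
apply/existsP; exists (nth x0 C i); apply/existsP; exists (nth x0 C j).
case: Hk => Hk.
  move: HR; case: (b) => HR.
    by apply/existsP; exists (nth x0 E j); rewrite mi mj HR -Hk nth_index // eqxx.
  by apply/existsP; exists (nth x0 E j); rewrite mi mj HR -Hk nth_index // eqxx orbT.
move: HR; case: (b) => HR.
  by apply/existsP; exists (nth x0 E i); rewrite mi mj HR -Hk nth_index // eqxx orbT.
by apply/existsP; exists (nth x0 E i); rewrite mi mj HR -Hk nth_index // eqxx.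
Qed.


Hypothesis HM : forall C, maximal_chain C -> increasing_on th C \/ decreasing_on th C.

Lemma Dlem (S : {set X}) : maxch S -> (1 < #|S|)%N ->
 exists x0 (D : seq X) (f : nat -> X) (inc : bool),
  [/\ maximal_chain D, size D = #|S|, gset S = [set x in D],
      (forall i, (i < #|S|)%N -> f i \in S) &
      forall i j, (i < j)%N -> (j < #|S|)%N ->
        thmap th (if inc then (f i, f j) else (f j, f i)) = Some (nth x0 D i, nth x0 D j)].
Proof.
move=> HS S1.
have mC := maxch_seq HS.
have szC : size (sortS S) = #|S| := size_sortS S.
have [x0 _] : exists x0 : X, x0 \in S.
  by case/card_gt1P: S1 => x [y [xS _ _]]; exists x.
case: (HM mC) => [[D [mD [szD R]]] | [D [mD [szD R]]]].
- exists x0, D, (nth x0 (sortS S)), true; split => //.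
  + by rewrite szD.
  + apply: (@gset_eq S (sortS S) D x0 true); first exact: mC.1.
    * by move=> x; rewrite mem_sortS.
    * by [].
    * by rewrite szC.
    by move=> i j ij jn; rewrite R // ij jn.
  + by move=> i iS; rewrite -mem_sortS mem_nth // szC.
  + by move=> i j ij jn; rewrite R // ij szC.
- exists x0, D, (fun i => nth x0 (sortS S) (#|S| - i.+1)), false; split => //.
  + by rewrite szD.
  + have -> : [set x in D] = [set x in rev D] by apply/setP => x; rewrite !inE mem_rev.
    apply: (@gset_eq S (sortS S) (rev D) x0 false); first exact: mC.1.
    * by move=> x; rewrite mem_sortS.
    * by rewrite size_rev.
    * by rewrite szC.
    by move=> i j ij jn; rewrite R // ij jn.
  + move=> i iS; rewrite -mem_sortS mem_nth // szC.
    have : (0 < #|S|)%N by apply: leq_ltn_trans iS.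
    by move=> h; rewrite ltn_subrL h.
  + move=> i j ij jn; rewrite R; last first.
      by apply/andP; split; rewrite ?szC; lia.
    have szD' : size D = #|S| by rewrite szD szC.
    rewrite !nth_rev ?szD' ?ltn_subrL //; try lia.
    have -> : (#|S| - (#|S| - i.+1).+1)%N = i by lia.
    by have -> : (#|S| - (#|S| - j.+1).+1)%N = j by lia.
Qed.


Definition MC2 := [set S : {set X} | maxch S && (1 < #|S|)%N].

Lemma inMC2 S : (S \in MC2) = maxch S && (1 < #|S|)%N.
Proof. by rewrite /MC2 inE. Qed.

Lemma g_MC2 S : S \in MC2 -> gset S \in MC2.
Proof.
rewrite !inMC2 => /andP[HS S1].
have [x0 [D [f [inc [mD szD -> _ _]]]]] := Dlem HS S1.
rewrite seq_maxch //= cardsE; move/card_uniqP: (lt_sorted_uniq mD.1) => ->.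
by rewrite szD.
Qed.

Lemma g_pairs S a b : S \in MC2 -> a \in gset S -> b \in gset S -> a < b ->
  exists p q, [/\ p \in S, q \in S & thmap th (p, q) = Some (a, b)].
Proof.
rewrite inMC2 => /andP[HS S1].
have [x0 [D [f [inc [mD szD -> fS R]]]]] := Dlem HS S1.
rewrite !inE => aD bD ab.
have ij := index_lt mD.1 aD bD ab.
have jn : (index b D < #|S|)%N by rewrite -szD index_mem.
have in' : (index a D < #|S|)%N by apply: ltn_trans jn.
have := R _ _ ij jn; rewrite !nth_index //.
by case: (inc) => HR; [exists (f (index a D)), (f (index b D)) | exists (f (index b D)), (f (index a D))];
  rewrite ?fS.
Qed.

Lemma g_triple S a b c : S \in MC2 -> a \in gset S -> b \in gset S -> c \in gset S ->
  a < b -> b < c ->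
  exists p q r,
   (thmap th (p, q) = Some (a, b) /\ thmap th (q, r) = Some (b, c) /\ thmap th (p, r) = Some (a, c)) \/
   (thmap th (q, r) = Some (a, b) /\ thmap th (p, q) = Some (b, c) /\ thmap th (p, r) = Some (a, c)).
Proof.
rewrite inMC2 => /andP[HS S1].
have [x0 [D [f [inc [mD szD -> fS R]]]]] := Dlem HS S1.
rewrite !inE => aD bD cD ab bc.
have ij := index_lt mD.1 aD bD ab.
have jk := index_lt mD.1 bD cD bc.
have kn : (index c D < #|S|)%N by rewrite -szD index_mem.
have jn : (index b D < #|S|)%N by apply: ltn_trans kn.
have ik := ltn_trans ij jk.
have := R _ _ ij jn; have := R _ _ jk kn; have := R _ _ ik kn.
rewrite !nth_index //.
case: (inc) => H1 H2 H3.
  by exists (f (index a D)), (f (index b D)), (f (index c D)); left.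
by exists (f (index c D)), (f (index b D)), (f (index a D)); right.
Qed.

Lemma g_inj : {in MC2 &, injective gset}.
Proof.
have half : forall S1 S2, S1 \in MC2 -> S2 \in MC2 -> gset S1 = gset S2 -> S1 \subset S2.
  move=> S1 S2 H1 H2 E; apply/subsetP => x xS1.
  move: (H1); rewrite inMC2 => /andP[/andP[HS1 _] c1].
  have [y [yS1 xy]] : exists y, y \in S1 /\ x != y.
    case/card_gt1P: c1 => u [v [uS vS uv]].
    case: (eqVneq x u) => [->|xu]; first by exists v.
    by exists u.
  have cmp : (x <= y) || (y <= x).
    by move/forallP: HS1 => /(_ x) /implyP /(_ xS1) /forallP /(_ y) /implyP /(_ yS1).
  have : (x < y) || (y < x).
    case/orP: cmp => h; first by rewrite lt_neqAle xy h.
    by rewrite [y < x]lt_neqAle eq_sym xy h orbT.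
  case/orP => h.
  - have [[a b] Hv] := thmap_ex (p := (x, y)) h.
    have ab : a < b by case: (thmap_lt Hv).
    have ag : a \in gset S1.
      by rewrite inE; apply/existsP; exists x; apply/existsP; exists y; apply/existsP; exists b;
        rewrite xS1 yS1 Hv eqxx.
    have bg : b \in gset S1.
      by rewrite inE; apply/existsP; exists x; apply/existsP; exists y; apply/existsP; exists a;
        rewrite xS1 yS1 Hv eqxx orbT.
    rewrite E in ag bg.
    have [p [q [pS qS Hpq]]] := g_pairs H2 ag bg ab.
    by have [<- _] : (p, q) = (x, y) by apply: thmap_inj Hpq Hv.
  - have [[a b] Hv] := thmap_ex (p := (y, x)) h.
    have ab : a < b by case: (thmap_lt Hv).
    have ag : a \in gset S1.
      by rewrite inE; apply/existsP; exists y; apply/existsP; exists x; apply/existsP; exists b;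
        rewrite xS1 yS1 Hv eqxx.
    have bg : b \in gset S1.
      by rewrite inE; apply/existsP; exists y; apply/existsP; exists x; apply/existsP; exists a;
        rewrite xS1 yS1 Hv eqxx orbT.
    rewrite E in ag bg.
    have [p [q [pS qS Hpq]]] := g_pairs H2 ag bg ab.
    by have [_ <-] : (p, q) = (y, x) by apply: thmap_inj Hpq Hv.
move=> S1 S2 H1 H2 E; apply/eqP; rewrite eqEsubset.
by rewrite (half S1 S2) // (half S2 S1).
Qed.

Lemma g_surj T : T \in MC2 -> exists2 S, S \in MC2 & gset S = T.
Proof.
move=> HT.
have sub : gset @: MC2 \subset MC2.
  by apply/subsetP => y /imsetP [S HS ->]; apply: g_MC2.
have : gset @: MC2 == MC2.
  by rewrite eqEcard sub /= (card_in_imset g_inj).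
move/eqP => E; move: HT; rewrite -{1}E => /imsetP [S HS ->].
by exists S.
Qed.

Lemma Key a b c : a < b -> b < c ->
  exists p q r,
   (thmap th (p, q) = Some (a, b) /\ thmap th (q, r) = Some (b, c) /\ thmap th (p, r) = Some (a, c)) \/
   (thmap th (q, r) = Some (a, b) /\ thmap th (p, q) = Some (b, c) /\ thmap th (p, r) = Some (a, c)).
Proof.
move=> ab bc.
have ac := lt_trans ab bc.
have H0 : ischain [set a; b; c].
  apply/forallP => x; apply/implyP; rewrite !inE => Hx.
  apply/forallP => y; apply/implyP; rewrite !inE => Hy.
  move: Hx Hy => /orP[/orP[/eqP->|/eqP->]|/eqP->] /orP[/orP[/eqP->|/eqP->]|/eqP->];
    by rewrite ?lexx ?(ltW ab) ?(ltW bc) ?(ltW ac) ?orbT.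
have [T HT sub] := ext_max H0.
have T2 : T \in MC2.
  rewrite inMC2 HT /=; apply/card_gt1P; exists a, b; split.
  - by apply: (subsetP sub); rewrite !inE eqxx.
  - by apply: (subsetP sub); rewrite !inE eqxx orbT.
  - by rewrite lt_eqF.
have [S HS E] := g_surj T2.
apply: (g_triple HS); rewrite // E; apply: (subsetP sub); rewrite !inE eqxx ?orbT //.
Qed.

End Theta.
End Chains.

Section Final.
Context {d : Order.disp_t} {X : finPOrderType d}.
Variables (th : @B d X -> @B d X) (z : X).

Definition Ps (p : X * X) := (p.1 < p.2) &&
           [exists w : X, (z < w) && (thmap th (z, w) == Some p)].
Definition Ms (p : X * X) := (p.2 < p.1) &&
           [exists w : X, (z < w) && (thmap th (z, w) == Some (p.2, p.1))].
Definition Pt (p : X * X) := (p.1 < p.2) &&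
           [exists w : X, (w < z) && (thmap th (w, z) == Some p)].
Definition Mt (p : X * X) := (p.2 < p.1) &&
           [exists w : X, (w < z) && (thmap th (w, z) == Some (p.2, p.1))].

Definition Gp (p : X * X) : int :=
  ((Ps p)%:Z - (Ms p)%:Z - (Pt p)%:Z + (Mt p)%:Z)%R.
Definition Gth (u v : X) : int := Gp (u, v).

Lemma cnt_sum (l : seq (X * X)) :
  ((count Ps l)%:Z - (count Ms l)%:Z - (count Pt l)%:Z + (count Mt l)%:Z)%R =
  (\sum_(p <- l) Gp p)%R.
Proof.
elim: l => [|p l IH]; first by rewrite big_nil.
rewrite big_cons -IH /Gp /=; lia.
Qed.

Lemma bal_iff u0 us : balanced th u0 us z <-> PS Gth (u0 :: us) = 0%R.
Proof.
have E : PS Gth (u0 :: us) = (\sum_(p <- steps u0 us) Gp p)%R.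
  by rewrite /PS /steps; apply: eq_bigr => -[u v].
have e1 : s_plus th u0 us z = count Ps (steps u0 us) by [].
have e2 : s_minus th u0 us z = count Ms (steps u0 us) by [].
have e3 : t_plus th u0 us z = count Pt (steps u0 us) by [].
have e4 : t_minus th u0 us z = count Mt (steps u0 us) by [].
rewrite E -cnt_sum /balanced e1 e2 e3 e4.
split; lia.
Qed.

Lemma Ganti_th u v : Gth u v = (- Gth v u)%R.
Proof. rewrite /Gth /Gp /Ps /Ms /Pt /Mt /=; lia. Qed.

Hypothesis Hinj : injective th.

Lemma Gval u v p q : thmap th (p, q) = Some (u, v) ->
  Gth u v = ((p == z)%:Z - (q == z)%:Z)%R.
Proof.
move=> H; have [pq uv] := thmap_lt H.
have E1 : Ps (u, v) = (p == z).
  rewrite /Ps /= uv /=; apply/existsP/eqP.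
    by case=> w /andP[_ /eqP Hw]; have [->] := thmap_inj Hinj H Hw.
  by move=> <-; exists q; rewrite pq H eqxx.
have E2 : Pt (u, v) = (q == z).
  rewrite /Pt /= uv /=; apply/existsP/eqP.
    by case=> w /andP[_ /eqP Hw]; have [_ ->] := thmap_inj Hinj H Hw.
  by move=> <-; exists p; rewrite pq H eqxx.
have E3 : Ms (u, v) = false by rewrite /Ms /= lt_gtF.
have E4 : Mt (u, v) = false by rewrite /Mt /= lt_gtF.
by rewrite /Gth /Gp E1 E2 E3 E4; lia.
Qed.

Hypothesis HM : forall C, maximal_chain C -> increasing_on th C \/ decreasing_on th C.

Lemma Gadd_th a b c : a < b -> b < c -> Gth a c = (Gth a b + Gth b c)%R.
Proof.
move=> ab bc; have [p [q [r [[H1 [H2 H3]]|[H1 [H2 H3]]]]]] := Key Hinj HM ab bc.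
  by rewrite (Gval H1) (Gval H2) (Gval H3); lia.
by rewrite (Gval H1) (Gval H2) (Gval H3); lia.
Qed.

End Final.

Theorem lemma4p2 (d : Order.disp_t) (X : finPOrderType d) (th : @B d X -> @B d X) :
  @connected_poset d X -> inM th ->
  (inAM th <->
   forall (z x1 : X) (xr ys : seq X), weak_crown x1 xr ys ->
     balanced th x1 (crown_walk x1 xr ys) z).
Proof.
move=> _ HinM; have [[th' thK th'K] HM] := HinM.
have Hinj : injective th by apply: can_inj thK.
split.
- case=> _ Had z x1 xr ys Hc; apply/bal_iff.
  have [p l] := crown_closed Hc.
  have [t' [p' l' e']] := refine (Ganti_th th z) (Gadd_th z Hinj HM) p.
  rewrite -e'; apply/bal_iff; apply: Had.
  by rewrite /closed_walk p' l' l eqxx.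
- move=> Hcr; split => // u0 us Hw z; apply/bal_iff.
  case/andP: Hw; case/lastP: us => [|c' l] //=; first by rewrite PS_one.
  rewrite last_rcons => pw /eqP El; subst l.
  have Hcr' : forall (x1 : X) (xr ys : seq X), weak_crown x1 xr ys ->
      PS (Gth th z) (x1 :: crown_walk x1 xr ys) = 0%R.
    by move=> x1 xr ys Hc; apply/bal_iff; apply: Hcr.
  have := @cyc_zero _ _ _ (Ganti_th th z) (Gadd_th z Hinj HM) Hcr' (size (u0 :: c')) (u0 :: c') (leqnn _).
  apply => /=.
  apply: sub_path pw => x y /orP[] /andP[h _]; rewrite /scomp h ?orbT //.
Qed.
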